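(* Let $\mathbb{F}$ be a finite field, $M\in\mathbb{F}^{m\times n}$ with $\operatorname{rank}(M)=r-1$. Let $C\in\mathbb{F}^{m\times r}$, $F\in\mathbb{F}^{r\times n}$ with $M=CF$, and let $C_0\in\mathbb{F}^{m\times(r-1)}$, $F_0\in\mathbb{F}^{(r-1)\times n}$ with $M=C_0F_0$. Then there exists $G\in\mathbb{F}^{(r-1)\times r}$ with $C=C_0G$, or there exists $H\in\mathbb{F}^{r\times(r-1)}$ with $F=HF_0$. *)

(* Defs.v *)
From mathcomp Require Import all_boot all_algebra.

(* Main.v *)
Require Import Defs.
From mathcomp Require Import all_boot all_algebra.
Local Open Scope ring_scope.

Lemma sub_rank_eq (F : fieldType) (m1 m2 n : nat) (A : 'M[F]_(m1, n)) (B : 'M[F]_(m2, n)) :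
  (A <= B)%MS -> (\rank B <= \rank A)%N -> (B <= A)%MS.
Proof.
move=> sAB le; have [_ <-] := mxrank_leqif_sup sAB.
by rewrite eqn_leq le mxrankS.
Qed.

(* r - 1 is written k, so r = k.+1 *)
Theorem lemma9 (F : finFieldType) (m n k : nat) (M : 'M[F]_(m, n))
  (hrank : \rank M = k)
  (C : 'M[F]_(m, k.+1)) (Fm : 'M[F]_(k.+1, n)) (hCF : M = C *m Fm)
  (C0 : 'M[F]_(m, k)) (F0 : 'M[F]_(k, n)) (hCF0 : M = C0 *m F0) :
  (exists G : 'M[F]_(k, k.+1), C = C0 *m G) \/
  (exists H : 'M[F]_(k.+1, k), Fm = H *m F0).
Proof.
have hMF0 : (M <= F0)%MS by rewrite hCF0 submxMl.
have hF0M : (F0 <= M)%MS by apply: sub_rank_eq => //; rewrite hrank rank_leq_row.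
have hMF : (M <= Fm)%MS by rewrite hCF submxMl.
case: (leqP (\rank Fm) k) => hk.
  right; apply/submxP; apply: (submx_trans (B := M)) => //.
  by apply: sub_rank_eq => //; rewrite hrank.
left.
have rf : row_free Fm.
  by rewrite /row_free eqn_leq rank_leq_row.
have hC : \rank C = k by rewrite -[RHS]hrank hCF mxrankMfree.
have hMt : (M^T <= C^T)%MS by rewrite hCF trmx_mul submxMl.
have hCt : (C^T <= M^T)%MS by apply: sub_rank_eq => //; rewrite !mxrank_tr hC hrank.
have hMt0 : (M^T <= C0^T)%MS by rewrite hCF0 trmx_mul submxMl.
have /submxP [D hD] := submx_trans hCt hMt0.
exists D^T; by rewrite -[C]trmxK hD trmx_mul trmxK.
Qed.
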